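(* Let $G$ be a finite abstract simplicial complex with connection matrix $L$, and let $g=L^{-1}$ (which exists and has integer entries). Then $\sum_{x,y\in G} g(x,y)=\chi(G)$, where $\chi(G)=\sum_{x\in G}\omega(x)$.
   Context: A finite abstract simplicial complex $G$ is a finite set of non-empty finite sets closed under taking non-empty subsets; its elements are called simplices. For $x\in G$ let $\dim(x)=|x|-1$ and $\omega(x)=(-1)^{\dim(x)}$. The connection matrix $L$ of $G$ is indexed by the simplices with $L(x,y)=1$ if $x\cap y\neq\emptyset$ and $L(x,y)=0$ otherwise. $\chi(G)=\sum_{x\in G}\omega(x)$ is the Euler characteristic. *)

(* Defs.v *)
From mathcomp Require Import all_boot all_order all_algebra.
Set Implicit Arguments. Unset Strict Implicit. Unset Printing Implicit Defensive.
Import GRing.Theory Num.Theory.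
Local Open Scope ring_scope.

Definition simplicial_complex (V : finType) (G : {set {set V}}) : Prop :=
  set0 \notin G /\
  forall x y : {set V}, x \in G -> y \subset x -> y != set0 -> y \in G.

Definition omega (V : finType) (x : {set V}) : int := (-1) ^+ (#|x|.-1).

Definition euler_char (V : finType) (G : {set {set V}}) : int :=
  \sum_(x in G) omega x.

Definition simplex (V : finType) (G : {set {set V}}) (i : 'I_#|G|) : {set V} :=
  enum_val i.

Definition connection_matrix (V : finType) (G : {set {set V}}) : 'M[int]_#|G| :=
  \matrix_(i, j) (if [disjoint simplex i & simplex j] then 0 else 1).

(* Main.v *)
Require Import Defs.
From mathcomp Require Import all_boot all_order all_algebra.
From mathcomp Require Import zify.
Import GRing.Theory Num.Theory.
Local Open Scope ring_scope.
Set Implicit Arguments.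

Lemma alt_sum (V : finType) (A B : {set V}) :
  \sum_(z : {set V} | (A \subset z) && (z \subset B)) (-1 : int) ^+ #|z|
  = (A == B)%:R * (-1) ^+ #|A|.
Proof.
case: (boolP (A \subset B)) => AB; last first.
  rewrite big_pred0; last first.
    move=> z; apply/negP => /andP[h1 h2]; by rewrite (subset_trans h1 h2) in AB.
  case: eqP => [eAB|]; last by rewrite mul0r.
  by rewrite eAB subxx in AB.
case: (eqVneq A B) => [<-|nAB].
  rewrite (big_pred1 A) ?mul1r // => z /=.
  by rewrite eqEsubset andbC.
have : B :\: A != set0.
  rewrite setD_eq0; apply/negP => BA; move/eqP: nAB; apply.
  by apply/eqP; rewrite eqEsubset AB BA.
case/set0Pn => a; rewrite inE => /andP[aA aB].
set h := fun z : {set V} => if a \in z then z :\ a else a |: z.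
have hK : involutive h.
  move=> z; rewrite /h; case: (boolP (a \in z)) => az.
    by rewrite in_setD1 eqxx /= setD1K.
  by rewrite setU11 setU1K.
set S := (X in X = _).
have SN : S = - S.
  rewrite /S {1}(reindex_inj (can_inj hK)) -sumrN.
  apply: eq_big => z.
    rewrite /h; case: (boolP (a \in z)) => az;
    apply/idP/idP => /andP[h1 h2]; apply/andP; split; apply/subsetP => x xin;
    move: xin (subsetP h1 x) (subsetP h2 x); rewrite !inE; case: (eqVneq x a) => [->|xa] /=; rewrite ?(negbTE aA) ?aB; try rewrite az; try rewrite (negbTE az); rewrite //=; case: (x \in A); case: (x \in z); case: (x \in B); by auto.
  move=> _; rewrite /h; case: (boolP (a \in z)) => az.
    by rewrite [in RHS](cardsD1 a) az exprS mulN1r opprK.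
  by rewrite cardsU1 az exprS mulN1r.
have : S + S = 0 by rewrite {1}SN addNr.
rewrite ?(negbTE nAB) mul0r => H; lia.
Qed.

Lemma omega_sign (V : finType) (x : {set V}) : x != set0 -> omega x = - (-1) ^+ #|x|.
Proof.
rewrite -card_gt0 /omega => h; by rewrite -{2}(prednK h) exprS mulN1r opprK.
Qed.

Lemma sum_omega (V : finType) (S : {set V}) :
  \sum_(z : {set V} | (z \subset S) && (z != set0)) omega z = (S != set0)%:R.
Proof.
have := alt_sum set0 S.
rewrite (bigD1 set0) /= ?sub0set // cards0 expr0 mulr1.
rewrite (eq_bigl (fun z : {set V} => (z \subset S) && (z != set0))); last first.
  by move=> z; rewrite sub0set.
rewrite (eq_bigr (fun z => - omega z)); last first.
  by move=> z /andP[_ nz]; rewrite omega_sign // opprK.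
rewrite sumrN eq_sym => H.
move: H; set T := \sum_(_ | _) omega _.
case: (S == set0) => /= H; lia.
Qed.

Section M.
Context (V : finType) (G : {set {set V}}).
Definition Zm : 'M[int]_#|G| := \matrix_(i, j) ((simplex i \subset simplex j)%:R).
Definition Wm : 'M[int]_#|G| := \matrix_(i, j)
  ((simplex i \subset simplex j)%:R * (-1) ^+ #|simplex i| * (-1) ^+ #|simplex j|).
Definition dv : 'rV[int]_#|G| := \row_i omega (simplex i).
Definition Dm : 'M[int]_#|G| := diag_mx dv.
Definition um : 'cV[int]_#|G| := \col_i omega (simplex i).
End M.

Lemma reidx (V : finType) (G : {set {set V}}) (P : pred {set V}) (F : {set V} -> int) :
  (forall z, P z -> z \in G) ->
  \sum_(k < #|G|) (P (simplex k))%:R * F (simplex k) = \sum_(z | P z) F z.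
Proof.
move=> PG.
symmetry; rewrite (eq_bigl (fun z => (z \in G) && P z)); last first.
  by move=> z /=; case: (boolP (P z)) => Pz; rewrite ?andbF // PG.
rewrite big_enum_val_cond big_mkcond /=; apply: eq_bigr => k _.
by rewrite /simplex; case: (P _); rewrite ?mul1r ?mul0r.
Qed.

Lemma sign2 (n : nat) : (-1 : int) ^+ n * (-1) ^+ n = 1.
Proof. by rewrite -exprMn mulrNN mulr1 expr1n. Qed.

Section Main.
Variables (V : finType) (G : {set {set V}}).
Hypothesis sc : simplicial_complex G.

Lemma s_in (i : 'I_#|G|) : simplex i \in G.
Proof. exact: enum_valP. Qed.

Lemma s_n0 (i : 'I_#|G|) : simplex i != set0.
Proof. case: sc => h _; apply/eqP => e; move: (s_in i); rewrite e; by apply/negP. Qed.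

Lemma ZW : Zm G *m Wm G = 1%:M.
Proof.
apply/matrixP => i j; rewrite !mxE.
rewrite (eq_bigr (fun k => ((simplex i \subset simplex k) && (simplex k \subset simplex j))%:R
   * (-1) ^+ #|simplex k| * (-1) ^+ #|simplex j|)); last first.
  by move=> k _; rewrite !mxE !mulrA -natrM mulnb.
rewrite -big_distrl /= (eq_bigr (fun k => ((simplex i \subset simplex k) && (simplex k \subset simplex j))%:R
   * (-1) ^+ #|simplex k|)) //.
rewrite (reidx (fun z => (simplex i \subset z) && (z \subset simplex j)) (fun z => (-1) ^+ #|z|)).
  rewrite alt_sum; case: (eqVneq i j) => [->|nij]; first by rewrite eqxx mul1r sign2.
  have -> : (simplex i == simplex j) = false.
    by apply/negbTE; apply: contra nij => /eqP /enum_val_inj ->.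
  by rewrite !mul0r.
move=> z /andP[h1 h2]; case: sc => _ h; apply: (h _ _ (s_in j) h2).
apply: contraNneq (s_n0 i) => e; by rewrite -subset0 -e.
Qed.

Lemma DD : Dm G *m Dm G = 1%:M.
Proof.
apply/matrixP => i j; rewrite /Dm mul_diag_mx !mxE.
case: (eqVneq i j) => [->|nij]; last by rewrite mulr0n mulr0.
by rewrite !mulr1n /omega sign2.
Qed.

Lemma sumZ (S : {set V}) (x : {set V}) : x \in G -> S \subset x ->
  \sum_(k < #|G|) (simplex k \subset S)%:R * omega (simplex k) = (S != set0)%:R.
Proof.
move=> xG Sx.
rewrite -sum_omega -(reidx (G := G)); last first.
  move=> z /andP[h1 h2]; case: sc => _ h; exact: (h _ _ xG (subset_trans h1 Sx) h2).
by apply: eq_bigr => k _; rewrite (s_n0 k) andbT.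
Qed.

Lemma Lfac : connection_matrix G = (Zm G)^T *m Dm G *m Zm G.
Proof.
apply/matrixP => i j; rewrite -mulmxA /Dm mul_diag_mx !mxE.
rewrite (eq_bigr (fun k => (simplex k \subset simplex i :&: simplex j)%:R * omega (simplex k))); last first.
  by move=> k _; rewrite !mxE subsetI mulrCA -natrM mulnb mulrC.
rewrite (sumZ (s_in i)) ?subsetIl // setI_eq0.
by case: [disjoint _ & _].
Qed.

Lemma Zu : (Zm G)^T *m um G = const_mx 1.
Proof.
apply/matrixP => i j; rewrite !mxE.
rewrite (eq_bigr (fun k => (simplex k \subset simplex i)%:R * omega (simplex k))); last first.
  by move=> k _; rewrite !mxE.
by rewrite (sumZ (s_in i)) // s_n0.
Qed.

End Main.

Unset Implicit Arguments.

Theorem theorem2 (V : finType) (G : {set {set V}}) :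
  simplicial_complex G ->
  connection_matrix G \in unitmx /\
  \sum_(i < #|G|) \sum_(j < #|G|) (invmx (connection_matrix G)) i j = euler_char G.
Proof.
move=> sc.
have [ZU _] := mulmx1_unit (ZW sc).
have [DU _] := mulmx1_unit (DD G).
have LU : connection_matrix G \in unitmx.
  by rewrite Lfac // !unitmx_mul unitmx_tr ZU DU.
split=> //.
set Z := Zm G; set D := Dm G; set g := invmx (connection_matrix G).
have ZtU : Z^T \in unitmx by rewrite unitmx_tr.
have key : Z *m g *m Z^T = D.
  have h1 : Z^T *m D *m Z *m g = 1%:M by rewrite -Lfac // mulmxV.
  have h2 : D *m (Z *m g *m Z^T) = 1%:M.
    have -> : D *m (Z *m g *m Z^T) = invmx Z^T *m (Z^T *m D *m Z *m g) *m Z^T.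
      by rewrite !mulmxA (mulVmx ZtU) mul1mx.
    by rewrite h1 mulmx1 (mulVmx ZtU).
  by rewrite -[LHS]mul1mx -(DD G) -mulmxA h2 mulmx1.
have E : ((Z^T *m um G)^T *m g *m (Z^T *m um G)) 0 0 = ((um G)^T *m D *m um G) 0 0.
  by rewrite trmx_mul trmxK -key !mulmxA.
move: E; rewrite Zu // => E.
rewrite exchange_big /=.
transitivity (((const_mx 1 : 'cV[int]_#|G|)^T *m g *m (const_mx 1 : 'cV[int]_#|G|)) 0 0).
  rewrite mxE; apply eq_bigr => j _. rewrite !mxE mulr1. apply eq_bigr => i _. by rewrite !mxE mul1r.
rewrite E /D /Dm mul_mx_diag mxE /euler_char [RHS]big_enum_val.
apply eq_bigr => k _; rewrite !mxE. by rewrite /omega sign2 mul1r.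
Qed.
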